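(* Let $n,k$ be integers with $2\le k<n$. Then $$\overline{\mathrm{dist}}_F(\mathcal{S}^{n,k},\mathcal{S}^n_+)\le \frac{n-k}{n+k-2}.$$
   Context: $\mathcal{S}^n_+$ denotes the cone of $n\times n$ real symmetric positive semidefinite (PSD) matrices. For integers $2\le k\le n$, the $k$-PSD closure $\mathcal{S}^{n,k}$ is the set of all $n\times n$ real symmetric matrices all of whose $k\times k$ principal submatrices are PSD. For a matrix $M$, $\mathrm{dist}_F(M,\mathcal{S}^n_+)=\inf_{N\in\mathcal{S}^n_+}\|M-N\|_F$, where $\|\cdot\|_F$ is the Frobenius norm. For a set $\mathcal{K}$ of $n\times n$ matrices, $\overline{\mathrm{dist}}_F(\mathcal{K},\mathcal{S}^n_+)=\sup_{M\in\mathcal{K},\ \|M\|_F=1}\mathrm{dist}_F(M,\mathcal{S}^n_+)$. *)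

(* Defs.v *)
From mathcomp Require Import all_boot all_order all_algebra.
From mathcomp Require Import all_classical all_reals.
Set Implicit Arguments. Unset Strict Implicit. Unset Printing Implicit Defensive.
Import Order.TTheory GRing.Theory Num.Theory.
Local Open Scope ring_scope.
Local Open Scope classical_set_scope.

Definition symmetric (R : realType) (n : nat) (A : 'M[R]_n) : Prop := A^T = A.

Definition psd (R : realType) (n : nat) (A : 'M[R]_n) : Prop :=
  symmetric A /\ forall x : 'cV[R]_n, 0 <= (x^T *m A *m x) 0 0.

Definition PSDcone (R : realType) (n : nat) : set 'M[R]_n := [set A | psd A].

Definition principal_sub (R : realType) (n k : nat) (f : 'I_k -> 'I_n)
  (A : 'M[R]_n) : 'M[R]_k := mxsub f f A.

Definition kPSD (R : realType) (n k : nat) : set 'M[R]_n :=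
  [set A | symmetric A /\
     forall f : 'I_k -> 'I_n, {homo f : i j / (i < j)%N >-> (i < j)%N} ->
       psd (principal_sub f A)].

Definition normF (R : realType) (m n : nat) (A : 'M[R]_(m, n)) : R :=
  Num.sqrt (\sum_(i < m) \sum_(j < n) A i j ^+ 2).

Definition distF_psd (R : realType) (n : nat) (M : 'M[R]_n) : R :=
  inf [set normF (M - N) | N in @PSDcone R n].

Definition distbarF_psd (R : realType) (n : nat) (K : set 'M[R]_n) : R :=
  sup [set distF_psd M | M in K `&` [set M | normF M = 1]].

(* Main.v *)
Require Import Defs.
From mathcomp Require Import all_boot all_order all_algebra.
From mathcomp Require Import all_classical all_reals.
From mathcomp Require Import zify ring lra.
Import Order.TTheory GRing.Theory Num.Theory.
Local Open Scope ring_scope.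

Lemma enum_val_homo n (I : {set 'I_n}) :
  {homo (@enum_val _ (mem I)) : i j / (i < j)%N >-> (i < j)%N}.
Proof.
move=> i j ij.
have x0 : 'I_n by exact: enum_val i.
rewrite !(enum_val_nth x0).
have hs : sorted ltn (map val (enum I)).
  have -> : enum I = seq.filter (mem I) (enum 'I_n) by rewrite enumT /enum_mem /=.
  apply: (subseq_sorted ltn_trans (map_subseq _ (filter_subseq _ _))); rewrite val_enum_ord; exact: iota_ltn_sorted.
have := sorted_ltn_nth ltn_trans (val x0) hs.
have hsz : size (map val (enum I)) = #|I| by rewrite size_map cardE.
move=> /(_ i j); rewrite !inE hsz !ltn_ord !(nth_map x0) ?cardE -?cardE ?ltn_ord //.
by move=> /(_ isT isT ij).
Qed.

Lemma quadform (R : realType) m (A : 'M[R]_m) (y : 'cV[R]_m) :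
  (y^T *m A *m y) 0 0 = \sum_(a < m) \sum_(b < m) y a 0 * A a b * y b 0.
Proof.
rewrite !mxE; under eq_bigr do rewrite !mxE big_distrl /=.
rewrite exchange_big /=; apply: eq_bigr => a _; apply: eq_bigr => b _.
by rewrite !mxE.
Qed.

Lemma quad_sub_ge0 (R : realType) n k (M : 'M[R]_n)
  (HM : forall f : 'I_k -> 'I_n, {homo f : i j / (i < j)%N >-> (i < j)%N} ->
       psd (principal_sub f M))
  (I : {set 'I_n}) (hI : #|I| = k) (x : 'I_n -> R) :
  0 <= \sum_(i in I) \sum_(j in I) x i * M i j * x j.
Proof.
subst k.
have [_ /(_ (\col_a x (enum_val a)))] := HM _ (@enum_val_homo _ I).
rewrite quadform => H; rewrite big_enum_val /=.
under eq_bigr do rewrite big_enum_val /=.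
move: H; congr (0 <= _); apply: eq_bigr => a _; apply: eq_bigr => b _.
by rewrite !mxE.
Qed.
Section CS. Local Open Scope nat_scope.
Lemma card_supsets n k (S : {set 'I_n}) : (#|S| <= k)%N ->
  #|[set I : {set 'I_n} | (#|I| == k) && (S \subset I)]| = 'C(n - #|S|, k - #|S|).
Proof.
move=> Sk.
have E : 'C(n - #|S|, k - #|S|) = #|[set J : {set 'I_n} | J \subset ~: S & #|J| == k - #|S|]|.
  by rewrite cards_draws [#|~: S|]cardsCs finset.setCK card_ord.
rewrite E.
rewrite -(card_in_imset (f := fun I => I :\: S)); last first.
  move=> I1 I2; rewrite !inE => /andP[_ s1] /andP[_ s2] e.
  have K (I : {set 'I_n}) : S \subset I -> (I :\: S) :|: S = I.
    move=> sI; apply/finset.setP => x; rewrite !inE.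
    by case xS: (x \in S); rewrite ?orbT ?orbF //= (fintype.subsetP sI).
  by rewrite -(K _ s1) -(K _ s2) e.
have -> : [set I :\: S | I in [set I : {set 'I_n} | (#|I| == k) && (S \subset I)]]
   = [set J : {set 'I_n} | J \subset ~: S & #|J| == k - #|S|].
  apply/finset.setP => J; rewrite inE; apply/imsetP/andP.
    case=> I; rewrite inE => /andP[/eqP cI sI] ->; split.
      by apply/fintype.subsetP => x; rewrite !inE => /andP[].
    by rewrite cardsD (finset.setIidPr sI) cI.
  case=> JS /eqP cJ; exists (J :|: S).
    rewrite inE finset.subsetUr andbT cardsU.
    have -> : J :&: S = finset.set0.
      apply/finset.setP => x; rewrite !inE; apply/negP => /andP[xJ xS].
      by move/fintype.subsetP: JS => /(_ x xJ); by rewrite inE xS.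
    by rewrite cards0 subn0 cJ subnK.
  apply/finset.setP => x; rewrite !inE; case xS: (x \in S); rewrite ?andbF ?andbT ?orbF //.
  rewrite orbT /=; apply/negbTE/negP => xJ; move/fintype.subsetP: JS => /(_ x xJ); by rewrite inE xS.
by apply: eq_card => J; rewrite !inE.
Qed.
End CS.
Lemma kpsd_avg (R : realType) n k (hk : (2 <= k)%N) (hkn : (k < n)%N) (M : 'M[R]_n)
  (HM : forall f : 'I_k -> 'I_n, {homo f : i j / (i < j)%N >-> (i < j)%N} ->
       psd (principal_sub f M)) (x : 'I_n -> R) :
  0 <= \sum_i \sum_j (if i == j then (n-1)%:R else (k-1)%:R) * (x i * M i j * x j).
Proof.
pose q i j := x i * M i j * x j.
pose Sk := [set I : {set 'I_n} | #|I| == k].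
have H0 : 0 <= \sum_(I in Sk) \sum_(i in I) \sum_(j in I) q i j.
  by apply: sumr_ge0 => I; rewrite inE => /eqP hI; exact: (@quad_sub_ge0 R n k M HM I hI x).
have E : \sum_(I in Sk) \sum_(i in I) \sum_(j in I) q i j =
   \sum_i \sum_j (#|[set I : {set 'I_n} | (#|I| == k) && ([set i; j] \subset I)]|)%:R * q i j.
  transitivity (\sum_(I in Sk) \sum_i \sum_j ((i \in I) && (j \in I))%:R * q i j).
    apply: eq_bigr => I _; rewrite big_mkcond /=; apply: eq_bigr => i _.
    case: (i \in I) => /=; last by rewrite big1 // => j _; rewrite mul0r.
    rewrite big_mkcond /=; apply: eq_bigr => j _.
    by case: (j \in I); rewrite /= ?mul1r ?mul0r.
  rewrite exchange_big /=; apply: eq_bigr => i _.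
  rewrite exchange_big /=; apply: eq_bigr => j _.
  rewrite -big_distrl /=; congr (_ * _).
  rewrite -sum1_card big_mkcond /= natr_sum [RHS]big_mkcond; apply: eq_bigr => I _.
  by rewrite !inE finset.subUset !finset.sub1set; case: (#|I| == k); case: (i \in I); case: (j \in I).
have C1 i : #|[set I : {set 'I_n} | (#|I| == k) && ([set i; i] \subset I)]| = 'C(n-1, k-1).
  by rewrite finset.setUid card_supsets cards1 // ltnW.
have C2 i j : i != j -> #|[set I : {set 'I_n} | (#|I| == k) && ([set i; j] \subset I)]| = 'C(n-2, k-2).
  by move=> ij; rewrite card_supsets cards2 ij.
have Hb : ((n-1) * 'C(n-2, k-2) = (k-1) * 'C(n-1, k-1))%N.
  have := mul_bin_diag (n-1) (k-2).
  have -> : (k - 2).+1 = (k - 1)%N by lia.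
  by have -> : (n - 1).-1 = (n - 2)%N by lia.
have c1pos : (0 < 'C(n-1, k-1))%N by rewrite bin_gt0 leq_sub2r // ltnW.
rewrite -(@pmulr_rge0 _ ('C(n-1, k-1))%:R) ?ltr0n //.
have -> : ('C(n-1, k-1))%:R * \sum_i \sum_j (if i == j then (n-1)%:R else (k-1)%:R) * (x i * M i j * x j)
   = (n-1)%:R * (\sum_(I in Sk) \sum_(i in I) \sum_(j in I) q i j) :> R.
  rewrite E !mulr_sumr; apply: eq_bigr => i _; rewrite !mulr_sumr; apply: eq_bigr => j _.
  rewrite !mulrA; congr (_ * _); have [<-|ij] := eqVneq i j.
    by rewrite C1 -!natrM mulnC.
  by rewrite (C2 _ _ ij) -!natrM Hb (mulnC 'C(n-1, k-1)).
by rewrite mulr_ge0 // ler0n.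
Qed.

Lemma dist_bound (R : realType) n k (hk : (2 <= k)%N) (hkn : (k < n)%N) (M : 'M[R]_n)
  (HM : @kPSD R n k M) :
  distF_psd M <= (n - k)%:R / (n + k - 2)%:R * normF M.
Proof.
case: HM => Msym HM.
have en1 : (n - 1)%:R = n%:R - 1 :> R by rewrite natrB //; lia.
have ek1 : (k - 1)%:R = k%:R - 1 :> R by rewrite natrB //; lia.
have enk : (n - k)%:R = n%:R - k%:R :> R by rewrite natrB //; lia.
have ed : (n + k - 2)%:R = n%:R + k%:R - 2 :> R by rewrite natrB ?natrD //; lia.
have dpos : 0 < (n + k - 2)%:R :> R by rewrite ltr0n; lia.
have rpos : 0 <= (n - k)%:R / (n + k - 2)%:R :> R by rewrite divr_ge0 // ltW.
set d := (n + k - 2)%:R : R.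
set rho := (n - k)%:R / d.
pose a := 2 * (n-1)%:R / d.
pose b := 2 * (k-1)%:R / d.
pose N := \matrix_(i, j) ((if i == j then a else b) * M i j).
have psdN : psd N.
  split.
    apply/matrixP => i j; rewrite !mxE eq_sym; congr (_ * _).
    by have := congr1 (fun A : 'M[R]_n => A i j) Msym; rewrite mxE.
  move=> y; rewrite quadform.
  have -> : \sum_a0 \sum_b0 y a0 0 * N a0 b0 * y b0 0 =
     (2 / d) * \sum_i \sum_j (if i == j then (n-1)%:R else (k-1)%:R) * (y i 0 * M i j * y j 0).
    rewrite mulr_sumr; apply: eq_bigr => i _; rewrite mulr_sumr; apply: eq_bigr => j _.
    rewrite mxE /a /b; case: (i == j); rewrite /=; field; rewrite /d; exact: lt0r_neq0.
  apply: mulr_ge0; first by rewrite divr_ge0 // ltW.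
  exact: (@kpsd_avg R n k hk hkn M HM (fun i => y i 0)).
have eq : normF (M - N) = rho * normF M.
  rewrite /normF -[rho]ger0_norm ?rpos // -sqrtr_sqr -sqrtrM ?sqr_ge0 //.
  congr Num.sqrt; rewrite mulr_sumr; apply: eq_bigr => i _; rewrite mulr_sumr.
  apply: eq_bigr => j _; rewrite !mxE /a /b /rho.
  case: (i == j); rewrite /=.
    rewrite en1 enk /d ed; field; rewrite -ed; exact: lt0r_neq0.
  rewrite ek1 enk /d ed; field; rewrite -ed; exact: lt0r_neq0.
have h1 : has_lbound [set normF (M - N0) | N0 in @PSDcone R n]%classic.
  by exists 0 => y [N0 _ <-]; exact: sqrtr_ge0.
have h2 : [set normF (M - N0) | N0 in @PSDcone R n]%classic (normF (M - N)) by exists N.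
rewrite -eq /distF_psd. have := ge_inf h1; apply; exact: h2.
Qed.

Theorem theorem1 (R : realType) (n k : nat) (hk : (2 <= k)%N) (hkn : (k < n)%N) :
  distbarF_psd (@kPSD R n k) <= (n - k)%:R / (n + k - 2)%:R.
Proof.
have rpos : 0 <= (n - k)%:R / (n + k - 2)%:R :> R by rewrite divr_ge0 // ler0n.
rewrite /distbarF_psd.
set E := (X in sup X).
have [->|ne] := eqVneq E set0; first by rewrite sup0.
apply: ge_sup; first exact/set0P.
move=> y [M [HM HN] <-].
have := @dist_bound R n k hk hkn M HM.
by rewrite HN mulr1.
Qed.
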